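(* Assume the standing setting. Let $S$ be a subset of $U$ containing at most one end of $e_1$ (or a subset of $W$ containing at most one end of $e_2$), and let $S'\subseteq V(G)$ satisfy $N_G(S)\subseteq S'$ and $|S'|\ge 2$. Then $|S'|\ge |S|+2$.
   Context: Graphs may have multiple edges but no loops. An edge is admissible if it lies in some perfect matching; a connected graph with at least two vertices is matching covered if every edge is admissible; an edge $e$ of a matching covered graph $G$ is removable if $G-e$ is matching covered. A brick is a 3-connected nonbipartite graph $G$ such that $G-x-y$ has a perfect matching for all distinct $x,y$. A nonbipartite matching covered graph $G$ is near-bipartite if it has a pair of edges $\{e_1,e_2\}$ (a removable doubleton) such that $G-\{e_1,e_2\}$ is bipartite matching covered. $N_G(X)$ is the set of vertices outside $X$ with a neighbour in $X$. Standing setting: $G$ is a near-bipartite brick with removable doubleton $\{e_1,e_2\}$, $H=G-\{e_1,e_2\}$, and $(U,W)$ is the bipartition of $H$, labelled so that both ends of $e_1$ lie in $U$ and both ends of $e_2$ lie in $W$ (so $e_1$ is the only edge of $G$ with both ends in $U$ and $e_2$ the only edge with both ends in $W$). *)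

(* Defs.v *)
(* Multigraphs (parallel edges allowed, no loops) on a finite
   vertex type V with a finite edge type E; each edge e has two ends
   (ends e).1 and (ends e).2.  A (sub)graph is given by a vertex set VS and
   an edge set ES (edges of ES are assumed to have both ends in VS). *)
From mathcomp Require Import all_boot all_order.
Set Implicit Arguments. Unset Strict Implicit. Unset Printing Implicit Defensive.

Section Graphs.
Variables (V E : finType) (ends : E -> V * V).

Definition ends_set (e : E) : {set V} := [set (ends e).1; (ends e).2].

Definition inc (v : V) (e : E) : bool := v \in ends_set e.

Definition del_verts (X : {set V}) (ES : {set E}) : {set E} :=
  [set e in ES | [disjoint ends_set e & X]].

Definition perfect_matching (VS : {set V}) (ES : {set E}) (M : {set E}) : Prop :=
  M \subset ES /\ forall v, v \in VS -> #|[set e in M | inc v e]| = 1.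

Definition adj (ES : {set E}) : rel V :=
  fun x y => [exists e in ES, ((ends e).1 == x) && ((ends e).2 == y)
                           || ((ends e).1 == y) && ((ends e).2 == x)].

Definition connectedg (VS : {set V}) (ES : {set E}) : Prop :=
  forall x y, x \in VS -> y \in VS -> connect (adj ES) x y.

Definition bipartite_with (VS : {set V}) (ES : {set E}) (A B : {set V}) : Prop :=
  A :&: B = set0 /\ A :|: B = VS /\
  forall e, e \in ES ->
    ((ends e).1 \in A) && ((ends e).2 \in B) || ((ends e).1 \in B) && ((ends e).2 \in A).

Definition bipartite (VS : {set V}) (ES : {set E}) : Prop :=
  exists A B, bipartite_with VS ES A B.

Definition matching_covered (VS : {set V}) (ES : {set E}) : Prop :=
  2 <= #|VS| /\ connectedg VS ES /\
  forall e, e \in ES -> exists M, perfect_matching VS ES M /\ e \in M.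

Definition three_connected (VS : {set V}) (ES : {set E}) : Prop :=
  4 <= #|VS| /\
  forall X : {set V}, X \subset VS -> #|X| <= 2 ->
    connectedg (VS :\: X) (del_verts X ES).

Definition brick (VS : {set V}) (ES : {set E}) : Prop :=
  three_connected VS ES /\ ~ bipartite VS ES /\
  forall x y, x \in VS -> y \in VS -> x != y ->
    exists M, perfect_matching (VS :\ x :\ y) (del_verts [set x; y] ES) M.

Definition removable_doubleton (VS : {set V}) (ES : {set E}) (e1 e2 : E) : Prop :=
  e1 \in ES /\ e2 \in ES /\ e1 != e2 /\
  bipartite VS (ES :\ e1 :\ e2) /\ matching_covered VS (ES :\ e1 :\ e2).

Definition near_bipartite (VS : {set V}) (ES : {set E}) : Prop :=
  matching_covered VS ES /\ ~ bipartite VS ES /\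
  exists e1 e2, removable_doubleton VS ES e1 e2.

Definition nbhd (ES : {set E}) (X : {set V}) : {set V} :=
  [set y | (y \notin X) && [exists x in X, adj ES x y]].

End Graphs.

(* Main.v *)
Require Import Defs.
From mathcomp Require Import all_boot all_order.
From mathcomp Require Import zify.

Section Aux.
Variables (V E : finType) (ends : E -> V * V).
Hypothesis noloop : forall e, (ends e).1 != (ends e).2.

Definition other (e : E) (v : V) := if (ends e).1 == v then (ends e).2 else (ends e).1.

Lemma other_prop e v : inc ends v e ->
  [/\ other e v \in ends_set ends e, other e (other e v) = v, other e v != v,
      inc ends (other e v) e & adj ends [set: E] v (other e v)].
Proof.
have nl := noloop e.
rewrite /inc /adj /other /ends_set.
move=> H.
have Hadj : [exists e0 in [set: E], ((ends e0).1 == v) && ((ends e0).2 == (if (ends e).1 == v then (ends e).2 else (ends e).1))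
   || ((ends e0).1 == (if (ends e).1 == v then (ends e).2 else (ends e).1)) && ((ends e0).2 == v)].
  apply/existsP; exists e; rewrite in_setT /=.
  move: H nl; rewrite !inE; case: (ends e) => a b /=.
  case: (eqVneq a v) => [->|nav] /=; first by rewrite !eqxx.
  by rewrite eqxx /= eq_sym.
split=> //; move: H nl; rewrite !inE; case: (ends e) => a b /=;
  case: (eqVneq a v) => [->|nav] /=; rewrite ?eqxx ?orbT //;
  rewrite ?(negbTE nav) /=; try by move=> _ /negbTE; rewrite eq_sym => ->.
all: try by move=> /orP[/eqP E1|/eqP ->]; [rewrite E1 eqxx in nav| rewrite ?eqxx ?orbT ?(negbTE nav)].
by move=> /eqP ->.
Qed.


Lemma match_bound (x y : V) (M : {set E}) (S : {set V}) :
  perfect_matching ends ([set: V] :\ x :\ y) (del_verts ends [set x; y] [set: E]) M ->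
  x \notin S -> y \notin S ->
  (forall e s, s \in S -> inc ends s e -> other e s \notin S) ->
  #|S| <= #|nbhd ends [set: E] S :\ x :\ y|.
Proof.
move=> [sM pm] xS yS P.
have Hpick s : s \in S -> exists2 e, e \in M & inc ends s e.
  move=> sS; have : s \in [set: V] :\ x :\ y.
    have sx : s != x by apply/eqP => E0; rewrite -E0 sS in xS.
    have sy : s != y by apply/eqP => E0; rewrite -E0 sS in yS.
    by rewrite !inE sx sy.
  move/pm/eqP; rewrite eqn_leq => /andP[_]; rewrite card_gt0 => /set0Pn[e].
  by rewrite inE => /andP[? ?]; exists e.
pose f s := if [pick e in M | inc ends s e] is Some e then other e s else s.
have fP s : s \in S -> exists2 e, e \in M & inc ends s e /\ f s = other e s.
  move=> sS; rewrite /f; case: pickP => [e /andP[eM ie]|H].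
    by exists e.
  by have [e eM ie] := Hpick s sS; move: (H e); rewrite eM ie.
have dv e : e \in M -> [disjoint ends_set ends e & [set x; y]].
  by move=> eM; move: (subsetP sM e eM); rewrite inE => /andP[].
rewrite -(card_in_imset (f := f)).
  apply: subset_leq_card; apply/subsetP => z /imsetP[s sS ->].
  have [e eM [ie ->]] := fP s sS.
  have [oin _ _ _ oadj] := other_prop _ _ ie.
  have oxy : other e s \notin [set x; y].
    by rewrite (disjointFr (dv e eM) oin).
  rewrite !inE in oxy *; move: oxy; rewrite negb_or => /andP[-> ->] /=.
  apply/andP; split; first exact: P.
  by apply/existsP; exists s; rewrite sS.
move=> s1 s2 s1S s2S.
have [e eM [ie ->]] := fP s1 s1S.
have [e' eM' [ie' ->]] := fP s2 s2S.
move=> Heq.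
have [oin oo _ oi _] := other_prop _ _ ie.
have [oin' oo' _ oi' _] := other_prop _ _ ie'.
have zin : other e s1 \in [set: V] :\ x :\ y.
  have := negbT (disjointFr (dv e eM) oin); rewrite !inE negb_or => /andP[h1 h2].
  by rewrite h1 h2.
have ee' : e = e'.
  have := pm _ zin; move/eqP/cards1P => [e0 He0].
  have h1 : e \in [set e0] by rewrite -He0 inE eM oi.
  have h2 : e' \in [set e0] by rewrite -He0 inE eM' Heq oi'.
  by rewrite !inE in h1 h2; rewrite (eqP h1) (eqP h2).
by rewrite -oo -oo' Heq ee'.
Qed.

Lemma side_prop (A B : {set V}) (f g : E) (S : {set V}) :
  A :&: B = set0 ->
  (forall e, e != f -> e != g ->
     ((ends e).1 \in A) && ((ends e).2 \in B) || ((ends e).1 \in B) && ((ends e).2 \in A)) ->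
  ends_set ends g \subset B -> S \subset A -> #|S :&: ends_set ends f| <= 1 ->
  forall e s, s \in S -> inc ends s e -> other e s \notin S.
Proof.
move=> AB spl gB SA Sf e s sS ie.
have sA := subsetP SA s sS.
have nAB v : v \in A -> v \in B -> False.
  move=> a b; have : v \in A :&: B by rewrite inE a b.
  by rewrite AB inE.
have nS v : v \in B -> v \notin S.
  by move=> vB; apply/negP => /(subsetP SA) vA; apply: (nAB v).
have [oin _ ne _ _] := other_prop _ _ ie.
case: (eqVneq e f) => [ef|ef].
  subst f; apply/negP => oS.
  have : [set s; other e s] \subset S :&: ends_set ends e.
    have ie' : s \in ends_set ends e by exact: ie.
    apply/subsetP => v; rewrite in_set2 => /orP[/eqP->|/eqP->]; rewrite inE.
      by rewrite sS ie'.
    by rewrite oS oin.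
  move/subset_leq_card; rewrite cards2 eq_sym ne => H.
  by move: (leq_trans H Sf).
case: (eqVneq e g) => [eg|eg].
  by subst g; exfalso; apply: (nAB s sA); apply: (subsetP gB).
move: (spl e ef eg) oin ie ne; rewrite /inc /ends_set !inE; case: (ends e) => a b /=.
move=> /orP[/andP[aA bB]|/andP[aB bA]] /orP[/eqP->|/eqP->] /orP[/eqP sa|/eqP sb]; subst s;
  rewrite ?eqxx //= => _; try by apply: nS.
all: by exfalso; apply: (nAB _ sA).
Qed.

End Aux.

Theorem mainTheorem5 (V E : finType) (ends : E -> V * V)
  (noloop : forall e, (ends e).1 != (ends e).2)
  (e1 e2 : E) (U W : {set V})
  (Hbrick : brick ends [set: V] [set: E])
  (Hnb : near_bipartite ends [set: V] [set: E])
  (Hrd : removable_doubleton ends [set: V] [set: E] e1 e2)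
  (HUW : bipartite_with ends [set: V] ([set: E] :\ e1 :\ e2) U W)
  (He1 : ends_set ends e1 \subset U)
  (He2 : ends_set ends e2 \subset W)
  (S S' : {set V})
  (HS : (S \subset U /\ #|S :&: ends_set ends e1| <= 1) \/
        (S \subset W /\ #|S :&: ends_set ends e2| <= 1))
  (HN : nbhd ends [set: E] S \subset S')
  (HS' : 2 <= #|S'|) :
  #|S| + 2 <= #|S'|.
Proof.
have [_ [_ Hpm]] := Hbrick.
have [dUW [_ Hsplit]] := HUW.
have spl e : e != e1 -> e != e2 ->
   ((ends e).1 \in U) && ((ends e).2 \in W) || ((ends e).1 \in W) && ((ends e).2 \in U).
  by move=> h1 h2; apply: Hsplit; rewrite !inE h1 h2.
have nUW v : v \in U -> v \in W -> False.
  move=> a b; have : v \in U :&: W by rewrite inE a b.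
  by rewrite dUW inE.
have [P [a [b [ab aS bS]]]] : (forall e s, s \in S -> inc ends s e -> @other _ _ ends e s \notin S)
   /\ exists a b, [/\ a != b, a \notin S & b \notin S].
  case: HS => [[SU S1]|[SW S2]].
    split; first exact: (@side_prop _ _ ends noloop U W e1 e2 S dUW spl He2 SU S1).
    exists (ends e2).1, (ends e2).2; split; first exact: noloop.
      apply/negP => /(subsetP SU) h; apply: (nUW _ h); apply: (subsetP He2); by rewrite !inE eqxx.
    apply/negP => /(subsetP SU) h; apply: (nUW _ h); apply: (subsetP He2); by rewrite !inE eqxx orbT.
  split.
    apply: (@side_prop _ _ ends noloop W U e2 e1 S _ _ He1 SW S2); first by rewrite setIC.
    by move=> e h1 h2; rewrite orbC; apply: spl.
  exists (ends e1).1, (ends e1).2; split; first exact: noloop.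
    apply/negP => /(subsetP SW) h; apply: (nUW _ _ h); apply: (subsetP He1); by rewrite !inE eqxx.
  apply/negP => /(subsetP SW) h; apply: (nUW _ _ h); apply: (subsetP He1); by rewrite !inE eqxx orbT.
case: (set_0Vmem S) => [->|[s0 s0S]]; first by rewrite cards0.
rewrite leqNgt; apply/negP => Hlt.
set N := nbhd ends [set: E] S in HN.
have NS v : v \in N -> v \notin S by rewrite /N inE => /andP[].
suff [x [y [xy xS yS Hc]]] : exists x y, [/\ x != y, x \notin S, y \notin S & #|N :\ x :\ y| < #|S|].
  have [M HM] := Hpm x y (in_setT x) (in_setT y) xy.
  have := @match_bound _ _ ends noloop x y M S HM xS yS P.
  by rewrite leqNgt Hc.
have HNS' := subset_leq_card HN.
have s0in : 0 < #|S| by apply/card_gt0P; exists s0.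
case: (leqP 2 #|N|) => [/card_gt1P [x [y [xN yN xy]]]|HN1].
  exists x, y; split; [exact: xy|exact: NS|exact: NS|].
  have := cardsD1 x N; have := cardsD1 y (N :\ x).
  rewrite in_setD1 [y == x]eq_sym (negbTE xy) yN xN /=.
  lia.
suff [x [y [xy xS yS Hs]]] : exists x y, [/\ x != y, x \notin S, y \notin S & N \subset [set x; y]].
  exists x, y; split => //.
  suff -> : N :\ x :\ y = set0 by rewrite cards0.
  apply/setP => v; rewrite !in_setD1 in_set0; apply/negP => /and3P[vy vx vN].
  by move: (subsetP Hs v vN); rewrite !inE (negbTE vx) (negbTE vy).
move: HN1; rewrite ltnS leq_eqVlt ltnS leqn0 cards_eq0 => /orP[/cards1P[z Nz]|/eqP N0].
  have zS : z \notin S by apply: NS; rewrite Nz inE.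
  case: (eqVneq z a) => [za|za].
    exists z, b; split => //; first by rewrite za.
    by rewrite Nz sub1set !inE eqxx.
  exists z, a; split => //.
  by rewrite Nz sub1set !inE eqxx.
exists a, b; split => //.
by rewrite N0 sub0set.
Qed.
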